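(* Let $\mathcal{M}=\langle S,\to,L\rangle$ be a labeled transition system and let $B\subseteq S\times S$. Then $B$ is a well-founded skipping relation (WFSK) on $\mathcal{M}$ if and only if $B$ is a reduced well-founded skipping relation (RWFSK) on $\mathcal{M}$.
   Context: A labeled transition system is $\mathcal{M}=\langle S,\to,L\rangle$ where $S$ is a non-empty (possibly infinite, of arbitrary cardinality) set of states, $\to\subseteq S\times S$ is left-total (every state has a successor), and $L$ is a function with domain $S$ (the labeling). For $k\ge 1$, $w\to^{k} v$ means there is a path $w=v_0\to v_1\to\cdots\to v_k=v$; $w\to^{+}v$ means $w\to^k v$ for some finite $k\ge 1$, and $w\to^{\ge 2}v$ means $w\to^k v$ for some finite $k\ge 2$. $B$ is a WFSK on $\mathcal{M}$ iff (WFSK1) for all $s,w\in S$ with $sBw$, $L(s)=L(w)$; and (WFSK2) there exist a well-founded set $\langle W,\prec\rangle$ and functions $\mathit{rankt}:S\times S\to W$ and $\mathit{rankl}:S\times S\times S\to\omega$ such that for all $s,u,w\in S$ with $s\to u$ and $sBw$, at least one of the following holds: (a) there is $v$ with $w\to v$ and $uBv$; (b) $uBw$ and $\mathit{rankt}(u,w)\prec\mathit{rankt}(s,w)$; (c) there is $v$ with $w\to v$, $sBv$ and $\mathit{rankl}(v,s,u)<\mathit{rankl}(w,s,u)$; (d) there is $v$ with $w\to^{\ge 2}v$ and $uBv$. $B$ is an RWFSK on $\mathcal{M}$ iff (RWFSK1) for all $s,w\in S$ with $sBw$, $L(s)=L(w)$; and (RWFSK2) there exist a well-founded set $\langle W,\prec\rangle$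 and a function $\mathit{rankt}:S\times S\to W$ such that for all $s,u,w\in S$ with $s\to u$ and $sBw$, either (a) $uBw$ and $\mathit{rankt}(u,w)\prec\mathit{rankt}(s,w)$, or (b) there is $v$ with $w\to^{+}v$ and $uBv$. *)

(* Defs.v *)
From Stdlib Require Import Arith Wellfounded Relations.

Record LTS (S Lab : Type) : Type := mkLTS {
  trans : S -> S -> Prop;
  label : S -> Lab
}.
Arguments trans {S Lab} _ _ _.
Arguments label {S Lab} _ _.

Definition is_LTS {S Lab : Type} (M : LTS S Lab) : Prop :=
  inhabited S /\ (forall s : S, exists u : S, trans M s u).

Fixpoint steps {St : Type} (R : St -> St -> Prop) (k : nat) (w v : St) : Prop :=
  match k with
  | O => w = v
  | Datatypes.S k' => exists x, R w x /\ steps R k' x v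
  end.

Definition plus_steps {S : Type} (R : S -> S -> Prop) (w v : S) : Prop :=
  exists k, 1 <= k /\ steps R k w v.

Definition ge2_steps {S : Type} (R : S -> S -> Prop) (w v : S) : Prop :=
  exists k, 2 <= k /\ steps R k w v.

Definition WFSK {S Lab : Type} (M : LTS S Lab) (B : S -> S -> Prop) : Prop :=
  (forall s w, B s w -> label M s = label M w) /\
  exists (W : Type) (prec : W -> W -> Prop) (rankt : S -> S -> W)
         (rankl : S -> S -> S -> nat),
    well_founded prec /\
    forall s u w, trans M s u -> B s w ->
      (exists v, trans M w v /\ B u v) \/
      (B u w /\ prec (rankt u w) (rankt s w)) \/
      (exists v, trans M w v /\ B s v /\ rankl v s u < rankl w s u) \/
      (exists v, ge2_steps (trans M) w v /\ B u v).

Definition RWFSK {S Lab : Type} (M : LTS S Lab) (B : S -> S -> Prop) : Prop :=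
  (forall s w, B s w -> label M s = label M w) /\
  exists (W : Type) (prec : W -> W -> Prop) (rankt : S -> S -> W),
    well_founded prec /\
    forall s u w, trans M s u -> B s w ->
      (B u w /\ prec (rankt u w) (rankt s w)) \/
      (exists v, plus_steps (trans M) w v /\ B u v).

(* Main.v *)
Require Import Defs.
From Stdlib Require Import Arith Lia Wellfounded.

Lemma plus_cons {S : Type} (R : S -> S -> Prop) w x v :
  R w x -> plus_steps R x v -> plus_steps R w v.
Proof.
  intros H [k [Hk Hs]]. exists (Datatypes.S k). split; [lia|]. simpl. eauto.
Qed.

Lemma plus_one {S : Type} (R : S -> S -> Prop) w v :
  R w v -> plus_steps R w v.
Proof. intros H. exists 1. split; [lia|]. simpl. eauto. Qed.

Theorem theorem1 (S Lab : Type) (M : LTS S Lab) (B : S -> S -> Prop) :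
  is_LTS M -> (WFSK M B <-> RWFSK M B).
Proof.
  intros _. split.
  - intros [HL [W [prec [rankt [rankl [Hwf H]]]]]].
    split; [exact HL|]. exists W, prec, rankt. split; [exact Hwf|].
    intros s u w Hsu.
    assert (Hn : forall n w, rankl w s u = n -> B s w ->
      (B u w /\ prec (rankt u w) (rankt s w)) \/
      (exists v, plus_steps (trans M) w v /\ B u v)).
    { intro n. induction n as [n IH] using lt_wf_ind.
      intros w0 Hr Hsw.
      destruct (H s u w0 Hsu Hsw) as [[v [Hv1 Hv2]]|[Hb|[[v [Hv1 [Hv2 Hv3]]]|[v [[k [Hk Hs]] Hv2]]]]].
      + right. exists v. split; [apply plus_one|]; auto.
      + left. exact Hb.
      + destruct (IH (rankl v s u) ltac:(lia) v eq_refl Hv2) as [[Hb _]|[v' [Hp Hb]]].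
        * right. exists v. split; [apply plus_one|]; auto.
        * right. exists v'. split; [eapply plus_cons; eauto|]; auto.
      + right. exists v. split; [exists k; split; [lia|exact Hs]|exact Hv2]. }
    intros Hsw. eapply Hn; eauto.
  - intros [HL [W [prec [rankt [Hwf H]]]]].
    split; [exact HL|]. exists W, prec, rankt, (fun _ _ _ => 0).
    split; [exact Hwf|].
    intros s u w Hsu Hsw.
    destruct (H s u w Hsu Hsw) as [Hb|[v [[k [Hk Hs]] Hv]]].
    + right; left; exact Hb.
    + destruct k as [|[|k]]; [lia| |].
      * left. simpl in Hs. destruct Hs as [x [Hx ->]]. eauto.
      * right; right; right. exists v. split; [exists (Datatypes.S (Datatypes.S k)); split; [lia|exact Hs]|exact Hv].
Qed.
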